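(* For each $\tau\in(0,1)$ and any real-valued random variable $W$ with finite expectation which is not almost surely constant, there exist real-valued random variables $U$ and $V$ with $\mathbb{E} U \neq \mathbb{E} V$ such that \[ \mathbb{P}(W\in C) = (1-\tau)\,\mathbb{P}(U\in C) + \tau\,\mathbb{P}(V\in C) \] for all Borel sets $C\subseteq\mathbb{R}$. Moreover, if $W$ has finite variance, then $U$ and $V$ can be chosen to have finite variances as well. *)

(* Defs.v *)
From HB Require Import structures.
From mathcomp Require Export all_boot all_order all_algebra.
From mathcomp Require Export all_classical all_reals all_analysis.
Export Order.TTheory GRing.Theory Num.Theory.

(* Main.v *)
Require Import Defs.
From mathcomp Require Import measurable_realfun.
From mathcomp Require Import ring lra.
From HB Require Import structures.
Import numFieldNormedType.Exports.
Local Open Scope classical_set_scope.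
Local Open Scope ring_scope.

Section mix.
Context d (T : measurableType d) (R : realType) (P : probability T R).
Variables (A : set T) (mA : measurable A) (x y : {nonneg R}).
Hypothesis hxy : (x%:num%:E * P A + y%:num%:E * P (~` A) = 1)%E.

Definition mix := measure_add (mscale x (mrestr P mA)) (mscale y (mrestr P (measurableC mA))).

Lemma mixE S : mix S = (x%:num%:E * P (S `&` A) + y%:num%:E * P (S `&` ~` A))%E.
Proof. by rewrite /mix measure_addE. Qed.

Let mix_setT : mix setT = 1%E.
Proof. by rewrite mixE !setTI. Qed.

HB.instance Definition _ := Measure.on mix.
HB.instance Definition _ := Measure_isProbability.Build _ _ _ mix mix_setT.
Definition mixP : probability T R := mix.

Lemma mix_on_A S : measurable S -> S `<=` A -> mix S = mscale x P S.
Proof.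
move=> mS SA; rewrite mixE /mscale/= setIidl//.
have -> : S `&` ~` A = set0 by apply/seteqP; split => t // [/SA].
by rewrite measure0 mule0 adde0.
Qed.

Lemma mix_on_Ac S : measurable S -> S `<=` ~` A -> mix S = mscale y P S.
Proof.
move=> mS SA; rewrite mixE /mscale/= (setIidl SA).
have -> : S `&` A = set0 by apply/seteqP; split => t // [/SA].
by rewrite measure0 mule0 add0e.
Qed.

Lemma ge0_integral_mix (f : T -> \bar R) : measurable_fun setT f -> (forall t, 0 <= f t)%E ->
  (\int[mixP]_t f t = x%:num%:E * \int[P]_(t in A) f t + y%:num%:E * \int[P]_(t in ~` A) f t)%E.
Proof.
move=> mf f0.
rewrite (_ : [set: T] = A `|` ~` A); last by rewrite setUv.
have mAc := measurableC mA.
rewrite ge0_integral_setU//; first last.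
all: try (by move=> t _; exact: f0).
all: try (by rewrite setUv).
all: try exact: measurable_funTS.
  by apply/disj_setPCl.
rewrite (eq_measure_integral (mscale x P)); last first.
  by move=> S mS SA; exact: mix_on_A.
rewrite [X in (_ + X)%E](eq_measure_integral (mscale y P)); last first.
  by move=> S mS SA; exact: mix_on_Ac.
rewrite !ge0_integral_mscale//.
- exact: measurable_funTS.
- exact: measurable_funTS.
Qed.

Lemma integral_mix (f : T -> \bar R) : P.-integrable setT f ->
  (\int[mixP]_t f t = x%:num%:E * \int[P]_(t in A) f t + y%:num%:E * \int[P]_(t in ~` A) f t)%E.
Proof.
move=> intf; have mf := measurable_int _ intf.
have mAc := measurableC mA.
have iA : P.-integrable A f by exact: integrableS intf.
have iAc : P.-integrable (~` A) f by exact: integrableS intf.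
rewrite integralE (@ge0_integral_mix (f^\+)%E); last 2 first.
- exact: measurable_funepos.
- by move=> t; exact: funepos_ge0.
rewrite (@ge0_integral_mix (f^\-)%E); last 2 first.
- exact: measurable_funeneg.
- by move=> t; exact: funeneg_ge0.
rewrite [(\int[P]_(t in A) f t)%E]integralE [(\int[P]_(t in ~` A) f t)%E]integralE.
have f1 := integrable_fin_num mA (integrable_funepos mA iA).
have f2 := integrable_fin_num mA (integrable_funeneg mA iA).
have f3 := integrable_fin_num mAc (integrable_funepos mAc iAc).
have f4 := integrable_fin_num mAc (integrable_funeneg mAc iAc).
rewrite -(fineK f1) -(fineK f2) -(fineK f3) -(fineK f4).
rewrite -!EFinM -!EFinD.
congr EFin; ring.
Qed.

End mix.

Section prod_transfer.
Context d1 d2 (T1 : measurableType d1) (T2 : measurableType d2) (R : realType)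
  (P1 : probability T1 R) (P2 : probability T2 R).
Local Open Scope ereal_scope.

Lemma prod_fst_set S : measurable S -> (P1 \x P2) (fst @^-1` S) = P1 S.
Proof.
move=> mS; rewrite (_ : fst @^-1` S = S `*` setT); last first.
  by apply/seteqP; split => -[a b] /=; [move=> ?; split | case].
rewrite product_measure1E// -[RHS]mule1; congr (_ * _); exact: probability_setT.
Qed.

Lemma prod_snd_set S : measurable S -> (P1 \x P2) (snd @^-1` S) = P2 S.
Proof.
move=> mS; rewrite (_ : snd @^-1` S = setT `*` S); last first.
  by apply/seteqP; split => -[a b] /=; [move=> ?; split | case].
rewrite product_measure1E// -[RHS]mul1e; congr (_ * _); exact: probability_setT.
Qed.

Lemma ge0_integral_fst (g : T1 -> \bar R) : measurable_fun setT g -> (forall t, 0 <= g t) ->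
  \int[P1 \x P2]_z g z.1 = \int[P1]_t g t.
Proof.
move=> mg g0.
transitivity (\int[pushforward (P1 \x P2) fst]_(y in setT) g y).
  rewrite ge0_integral_pushforward//.
  all: try by rewrite preimage_setT.
  all: try exact: measurable_fst.
  all: try by move=> t _; exact: g0.
apply: eq_measure_integral => S mS _; exact: prod_fst_set.
Qed.

Lemma ge0_integral_snd (g : T2 -> \bar R) : measurable_fun setT g -> (forall t, 0 <= g t) ->
  \int[P1 \x P2]_z g z.2 = \int[P2]_t g t.
Proof.
move=> mg g0.
transitivity (\int[pushforward (P1 \x P2) snd]_(y in setT) g y).
  rewrite ge0_integral_pushforward//.
  all: try by rewrite preimage_setT.
  all: try exact: measurable_snd.
  all: try by move=> t _; exact: g0.
apply: eq_measure_integral => S mS _; exact: prod_snd_set.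
Qed.

Lemma integral_fst (g : T1 -> \bar R) : measurable_fun setT g ->
  \int[P1 \x P2]_z g z.1 = \int[P1]_t g t.
Proof.
move=> mg; rewrite integralE [RHS]integralE.
rewrite -(@ge0_integral_fst (g^\+)); last 2 first.
- exact: measurable_funepos.
- by move=> t; exact: funepos_ge0.
rewrite -(@ge0_integral_fst (g^\-)); last 2 first.
- exact: measurable_funeneg.
- by move=> t; exact: funeneg_ge0.
congr (_ - _).
  apply: eq_integral => z _; by rewrite -[g^\+ z.1]/((g^\+ \o fst) z) -funepos_comp.
apply: eq_integral => z _; by rewrite -[g^\- z.1]/((g^\- \o fst) z) -funeneg_comp.
Qed.

Lemma integral_snd (g : T2 -> \bar R) : measurable_fun setT g ->
  \int[P1 \x P2]_z g z.2 = \int[P2]_t g t.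
Proof.
move=> mg; rewrite integralE [RHS]integralE.
rewrite -(@ge0_integral_snd (g^\+)); last 2 first.
- exact: measurable_funepos.
- by move=> t; exact: funepos_ge0.
rewrite -(@ge0_integral_snd (g^\-)); last 2 first.
- exact: measurable_funeneg.
- by move=> t; exact: funeneg_ge0.
congr (_ - _).
  apply: eq_integral => z _; by rewrite -[g^\+ z.2]/((g^\+ \o snd) z) -funepos_comp.
apply: eq_integral => z _; by rewrite -[g^\- z.2]/((g^\- \o snd) z) -funeneg_comp.
Qed.

End prod_transfer.

Section Lfun_lemmas.
Context d (T : measurableType d) (R : realType).
Local Open Scope ereal_scope.

Lemma LfunI (mu : {measure set T -> \bar R}) (f : T -> R) (r : R) : (0 < r)%R ->
  measurable_fun setT f -> \int[mu]_x (`|f x| `^ r)%:E < +oo -> f \in Lfun mu r%:E.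
Proof.
move=> r0 mf fin; rewrite inE; apply/andP; split; rewrite inE/=; first exact: mf.
rewrite /finite_norm unlock /=; apply: poweR_lty.
exact: fin.
Qed.

Lemma LfunD (mu : {measure set T -> \bar R}) (f : T -> R) (r : R) : (0 < r)%R ->
  f \in Lfun mu r%:E -> measurable_fun setT f /\ \int[mu]_x (`|f x| `^ r)%:E < +oo.
Proof.
move=> r0; rewrite inE => /andP[]; rewrite !inE/= => mf; split => //.
move: b; rewrite /finite_norm unlock /= => /lty_poweRy; apply.
by rewrite invr_eq0 gt_eqF.
Qed.

End Lfun_lemmas.
Arguments LfunD {d T R mu f r}.
Arguments LfunI {d T R mu f r}.

Section Lfun_transfer.
Local Open Scope ereal_scope.

Let mpow d (T : measurableType d) (R : realType) (f : T -> R) (r : R) :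
  measurable_fun setT f -> measurable_fun setT (fun x => (`|f x| `^ r)%:E).
Proof.
move=> mf; apply/measurable_EFinP.
apply: (measurableT_comp (measurable_powR _)) => //; exact: measurableT_comp.
Qed.

Lemma Lfun_mix d (T : measurableType d) (R : realType) (P : probability T R)
  (A : set T) (mA : measurable A) (x y : {nonneg R}) hxy (f : T -> R) (r : R) :
  (0 < r)%R -> f \in Lfun P r%:E -> f \in Lfun (@mixP d T R P A mA x y hxy) r%:E.
Proof.
move=> r0 /(LfunD r0) [mf fin]; apply: LfunI => //.
rewrite ge0_integral_mix//; last first.
  exact: mpow.
have mAc := measurableC mA.
have hA : \int[P]_(t in A) (`|f t| `^ r)%:E \is a fin_num.
{ rewrite ge0_fin_numE; last by apply: integral_ge0 => t _; rewrite lee_fin powR_ge0.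
  apply: (le_lt_trans _ fin); apply: ge0_subset_integral => //.
  all: try exact: mpow.
  all: by move=> t _; rewrite lee_fin powR_ge0. }
have hAc : \int[P]_(t in ~` A) (`|f t| `^ r)%:E \is a fin_num.
{ rewrite ge0_fin_numE; last by apply: integral_ge0 => t _; rewrite lee_fin powR_ge0.
  apply: (le_lt_trans _ fin); apply: ge0_subset_integral => //.
  all: try exact: mpow.
  all: by move=> t _; rewrite lee_fin powR_ge0. }
rewrite -ge0_fin_numE; last first.
  by rewrite adde_ge0// mule_ge0// integral_ge0// => t _; rewrite lee_fin powR_ge0.
by rewrite fin_numD !fin_numM.
Qed.

Lemma Lfun_fst d1 d2 (T1 : measurableType d1) (T2 : measurableType d2) (R : realType)
  (P1 : probability T1 R) (P2 : probability T2 R) (f : T1 -> R) (r : R) :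
  (0 < r)%R -> f \in Lfun P1 r%:E -> (f \o fst) \in Lfun (P1 \x P2) r%:E.
Proof.
move=> r0 /(LfunD r0) [mf fin]; apply: LfunI => //.
  exact: measurableT_comp mf measurable_fst.
rewrite (@ge0_integral_fst _ _ _ _ _ P1 P2 (fun t => (`|f t| `^ r)%:E))//.
all: try exact: mpow.
all: by move=> t; rewrite lee_fin powR_ge0.
Qed.

Lemma Lfun_snd d1 d2 (T1 : measurableType d1) (T2 : measurableType d2) (R : realType)
  (P1 : probability T1 R) (P2 : probability T2 R) (f : T2 -> R) (r : R) :
  (0 < r)%R -> f \in Lfun P2 r%:E -> (f \o snd) \in Lfun (P1 \x P2) r%:E.
Proof.
move=> r0 /(LfunD r0) [mf fin]; apply: LfunI => //.
  exact: measurableT_comp mf measurable_snd.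
rewrite (@ge0_integral_snd _ _ _ _ _ P1 P2 (fun t => (`|f t| `^ r)%:E))//.
all: try exact: mpow.
all: by move=> t; rewrite lee_fin powR_ge0.
Qed.

End Lfun_transfer.

Section compfun.
Context d1 d2 (T1 : measurableType d1) (T2 : measurableType d2) (R : realType)
  (W : {mfun T1 >-> R}).
Definition compfst : T1 * T2 -> R := fun z => W z.1.
Let mcompfst : measurable_fun setT compfst.
Proof. exact: measurableT_comp (measurable_funPT W) measurable_fst. Qed.
HB.instance Definition _ := isMeasurableFun.Build _ _ _ _ compfst mcompfst.
Definition compsnd : T2 * T1 -> R := fun z => W z.2.
Let mcompsnd : measurable_fun setT compsnd.
Proof. exact: measurableT_comp (measurable_funPT W) measurable_snd. Qed.
HB.instance Definition _ := isMeasurableFun.Build _ _ _ _ compsnd mcompsnd.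
End compfun.

Theorem proposition1p3 (R : realType) (d : measure_display) (T : measurableType d)
  (P : probability T R) (tau : R) (W : {RV P >-> R}) :
  0 < tau < 1 ->
  (W : T -> R) \in Lfun P 1%:E ->
  ~ (exists c : R, {ae P, forall w, W w = c}) ->
  (exists (d' : measure_display) (T' : measurableType d')
          (Q : probability T' R) (U V : {RV Q >-> R}),
     (U : T' -> R) \in Lfun Q 1%:E /\ (V : T' -> R) \in Lfun Q 1%:E /\
     ('E_Q[U] != 'E_Q[V])%E /\
     (forall C : set R, measurable C ->
        P (W @^-1` C) = ((1 - tau)%:E * Q (U @^-1` C) + tau%:E * Q (V @^-1` C))%E))
  /\
  ((W : T -> R) \in Lfun P 2%:E ->
   exists (d' : measure_display) (T' : measurableType d')
          (Q : probability T' R) (U V : {RV Q >-> R}),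
     (U : T' -> R) \in Lfun Q 2%:E /\ (V : T' -> R) \in Lfun Q 2%:E /\
     ('E_Q[U] != 'E_Q[V])%E /\
     (forall C : set R, measurable C ->
        P (W @^-1` C) = ((1 - tau)%:E * Q (U @^-1` C) + tau%:E * Q (V @^-1` C))%E)).
Proof.
move=> /andP[t0 t1] W1 Wnc.
have Efin : ('E_P[W])%E \is a fin_num by exact: expectation_fin_num.
have iW : P.-integrable setT (EFin \o W) by apply/Lfun1_integrable.
have mW : measurable_fun setT W := measurable_funPT W.
pose m := fine ('E_P[W])%E.
pose A := W @^-1` `]-oo, m].
have mA : measurable A by rewrite -[A]setTI; exact: mW (measurable_itv _).
have mAc := measurableC mA.
pose p := fine (P A).
have PAE : P A = p%:E by rewrite fineK// fin_num_measure.
have p0 : 0 <= p by rewrite fine_ge0// measure_ge0.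
have p1 : p <= 1 by rewrite -lee_fin -PAE probability_le1.
have PAcE : P (~` A) = (1 - p)%:E by rewrite probability_setC// PAE.
pose x := 1 + tau * (1 - p).
pose y := 1 - tau * p.
pose x' := tau + p - tau * p.
pose y' := 1 + (1 - tau) * p.
have hx : 0 <= x by rewrite /x; nra.
have hy : 0 <= y by rewrite /y; nra.
have hx' : 0 <= x' by rewrite /x'; nra.
have hy' : 0 <= y' by rewrite /y'; nra.
have hxy1 : ((NngNum hx)%:num%:E * P A + (NngNum hy)%:num%:E * P (~` A) = 1)%E.
  by rewrite PAE PAcE /= -!EFinM -EFinD; congr EFin; rewrite /x /y; ring.
have hxy2 : ((NngNum hx')%:num%:E * P A + (NngNum hy')%:num%:E * P (~` A) = 1)%E.
  by rewrite PAE PAcE /= -!EFinM -EFinD; congr EFin; rewrite /x' /y'; ring.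
pose Pa := @mixP _ _ _ P A mA _ _ hxy1.
pose Pb := @mixP _ _ _ P A mA _ _ hxy2.
pose Q : probability (T * T)%type R := (Pa \x Pb)%E.
pose U : {mfun (T * T)%type >-> R} := @compfst _ _ T T R W.
pose V : {mfun (T * T)%type >-> R} := @compsnd _ _ T T R W.
have LUV : forall r, 0 < r -> (W : T -> R) \in Lfun P r%:E ->
    (U : _ -> R) \in Lfun Q r%:E /\ (V : _ -> R) \in Lfun Q r%:E.
  move=> r r0 Wr; split.
  - exact: (@Lfun_fst _ _ _ _ _ Pa Pb W r r0 (@Lfun_mix _ _ _ P A mA _ _ hxy1 W r r0 Wr)).
  - exact: (@Lfun_snd _ _ _ _ _ Pa Pb W r r0 (@Lfun_mix _ _ _ P A mA _ _ hxy2 W r r0 Wr)).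
pose IA := (\int[P]_(t in A) (W t)%:E)%E.
pose IAc := (\int[P]_(t in ~` A) (W t)%:E)%E.
have mWE : measurable_fun setT (EFin \o W) by exact/measurable_EFinP.
have EU : ('E_Q[U] = x%:E * IA + y%:E * IAc)%E.
  rewrite expectation_def.
  transitivity (\int[Pa]_t (W t)%:E)%E.
    exact: (@integral_fst _ _ _ _ _ Pa Pb (EFin \o W) mWE).
  exact: (@integral_mix _ _ _ P A mA _ _ hxy1 (EFin \o W) iW).
have EV : ('E_Q[V] = x'%:E * IA + y'%:E * IAc)%E.
  rewrite expectation_def.
  transitivity (\int[Pb]_t (W t)%:E)%E.
    exact: (@integral_snd _ _ _ _ _ Pa Pb (EFin \o W) mWE).
  exact: (@integral_mix _ _ _ P A mA _ _ hxy2 (EFin \o W) iW).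
have Cid : forall C, measurable C ->
    P (W @^-1` C) = ((1 - tau)%:E * Q (U @^-1` C) + tau%:E * Q (V @^-1` C))%E.
  move=> C mC.
  have mS : measurable (W @^-1` C) by rewrite -[_ @^-1` _]setTI; exact: mW.
  have -> : Q (U @^-1` C) = Pa (W @^-1` C) by exact: (@prod_fst_set _ _ _ _ _ Pa Pb _ mS).
  have -> : Q (V @^-1` C) = Pb (W @^-1` C) by exact: (@prod_snd_set _ _ _ _ _ Pa Pb _ mS).
  have -> : Pa (W @^-1` C) = ((NngNum hx)%:num%:E * P (W @^-1` C `&` A) +
      (NngNum hy)%:num%:E * P (W @^-1` C `&` ~` A))%E by exact: mixE.
  have -> : Pb (W @^-1` C) = ((NngNum hx')%:num%:E * P (W @^-1` C `&` A) +
      (NngNum hy')%:num%:E * P (W @^-1` C `&` ~` A))%E by exact: mixE.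
  rewrite (measureDI P mS mA) setDE.
  have fa : P (W @^-1` C `&` A) \is a fin_num by rewrite fin_num_measure//; exact: measurableI.
  have fb : P (W @^-1` C `&` ~` A) \is a fin_num by rewrite fin_num_measure//; exact: measurableI.
  rewrite -[LHS](_ : (fine (P (W @^-1` C `&` ~` A)) + fine (P (W @^-1` C `&` A)))%:E = _); last first.
    by rewrite EFinD !fineK.
  rewrite -(fineK fa) -(fineK fb) /= -!EFinM -!EFinD; congr EFin.
  rewrite /x /y /x' /y'; ring.
have iA : P.-integrable A (EFin \o W) := integrableS measurableT mA (@subsetT _ A) iW.
have iAc : P.-integrable (~` A) (EFin \o W) := integrableS measurableT mAc (@subsetT _ _) iW.
have fA : IA \is a fin_num := integrable_fin_num mA iA.
have fAc : IAc \is a fin_num := integrable_fin_num mAc iAc.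
have EWE : ('E_P[W] = IA + IAc)%E.
  rewrite expectation_def (_ : [set: T] = A `|` ~` A); last by rewrite setUv.
  rewrite integral_setU//; last by apply/disj_setPCl.
  by rewrite setUv.
have mE : m = fine IA + fine IAc by rewrite /m EWE fineD.
have EUV : ('E_Q[U] != 'E_Q[V])%E.
  rewrite EU EV -(fineK fA) -(fineK fAc) -!EFinM -!EFinD eqe.
  apply/negP => /eqP h.
  have h' : (1 - p) * fine IA = p * fine IAc.
    apply/eqP; rewrite -subr_eq0.
    have <- : (x * fine IA + y * fine IAc) - (x' * fine IA + y' * fine IAc) = (1 - p) * fine IA - p * fine IAc.
      by rewrite /x /y /x' /y'; ring.
    by rewrite h subrr.
  have ha : fine IA = p * m by rewrite mE mulrDr -h'; ring.
  have icA : P.-integrable A (EFin \o cst m) := finite_measure_integrable_cst P m mA.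
  have icAc : P.-integrable (~` A) (EFin \o cst m) := finite_measure_integrable_cst P m mAc.
  have mB1 : measurable_fun A (fun t => (m - W t)%:E).
    apply/measurable_EFinP; apply: measurable_funB => //; exact: measurable_funTS.
  have mB2 : measurable_fun (~` A) (fun t => (W t - m)%:E).
    apply/measurable_EFinP; apply: measurable_funB => //; exact: measurable_funTS.
  have hA : ae_eq P A (fun t => (m - W t)%:E) (cst 0%E).
    apply/(ae_eq_integral_abs P mA mB1).
    transitivity (\int[P]_(t in A) ((cst m t)%:E - (W t)%:E))%E.
      apply: eq_integral => t; rewrite inE /A /= in_itv /= => Wt.
      by rewrite ger0_norm ?subr_ge0...
    rewrite integralB_EFin//.
    have -> : (\int[P]_(t in A) (cst m t)%:E = m%:E * P A)%E by exact: (integral_cst P _ m%:E).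
    rewrite [X in (_ - X)%E](_ : _ = IA)// -(fineK fA) ha PAE -EFinM -EFinB mulrC subrr.
    by [].
  have hAc : ae_eq P (~` A) (fun t => (W t - m)%:E) (cst 0%E).
    apply/(ae_eq_integral_abs P mAc mB2).
    transitivity (\int[P]_(t in ~` A) ((W t)%:E - (cst m t)%:E))%E.
      apply: eq_integral => t; rewrite inE /A /= in_itv /= => /negP; rewrite -ltNge => Wt.
      by rewrite ger0_norm ?subr_ge0 ?(ltW Wt).
    rewrite integralB_EFin//.
    have -> : (\int[P]_(t in ~` A) (cst m t)%:E = m%:E * P (~` A))%E by exact: (integral_cst P _ m%:E).
    rewrite [X in (X - _)%E](_ : _ = IAc)// -(fineK fAc) PAcE -EFinM -EFinB.
    have -> : fine IAc = m - fine IA by rewrite mE; ring.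
    by rewrite ha; congr EFin; ring.
  apply: Wnc; exists m.
  apply: filterS2 hA hAc => t HA HAc.
  have [At|nAt] := pselect (A t).
    by move: (HA At) => /= /eqP; rewrite eqe subr_eq0 => /eqP.
  by move: (HAc nAt) => /= /eqP; rewrite eqe subr_eq0 => /eqP.
split.
  have [LU LV] := LUV 1 ltr01 W1.
  by exists _, _, Q, U, V.
move=> W2; have [LU LV] := LUV 2 (ltr0n _ 2) W2.
by exists _, _, Q, U, V.
Qed.
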